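(* Let $\theta\ge1$, let $G=(\mu,\mathcal{V},\mathcal{W},\mathcal{E})$ be a $\theta$-maximal weighted bipartite graph with edge density $\delta>0$, and let $\eta\in(0,1]$. Then, for all sets $\mathcal{A}\subseteq\mathcal{V}$ and $\mathcal{B}\subseteq\mathcal{W}$ such that $\mu(\mathcal{A})\leqslant \eta\cdot \mu(\mathcal{V})$ and $\mu(\mathcal{B})\leqslant\eta \cdot \mu(\mathcal{W})$, we have $\mu(\mathcal{E}(\mathcal{A},\mathcal{B}))\leqslant \eta^{2-2/\theta} \cdot \mu(\mathcal{E})$.
   Context: A weighted bipartite graph is $G=(\mu,\mathcal{V},\mathcal{W},\mathcal{E})$ with $\mu:\mathbb{R}_{>0}\to\mathbb{R}_{>0}$, $\mathcal{V},\mathcal{W}$ finite sets of positive reals, $\mathcal{E}\subseteq\mathcal{V}\times\mathcal{W}$. $\mu(\mathcal{T})=\sum_{t\in\mathcal{T}}\mu(t)$ and $\mu(\mathcal{E})=\sum_{(v,w)\in\mathcal{E}}\mu(v)\mu(w)$. Edge density $\delta(G)=\mu(\mathcal{E})/(\mu(\mathcal{V})\mu(\mathcal{W}))$ if $\mathcal{E}\ne\emptyset$, else $0$. For $\theta\ge1$, $\mu^{(\theta)}(G)=\delta(G)^\theta\mu(\mathcal{V})\mu(\mathcal{W})$. A subgraph of $G$ is $(\mu,\mathcal{V}',\mathcal{W}',\mathcal{E}')$ with $\mathcal{V}'\subseteq\mathcal{V}$, $\mathcal{W}'\subseteq\mathcal{W}$, $\mathcal{E}'\subseteq\mathcal{E}\cap(\mathcal{V}'\times\mathcal{W}')$.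 $G$ is $\theta$-maximal if $\mu^{(\theta)}(G)\ge\mu^{(\theta)}(G')$ for every subgraph $G'$. $\mathcal{E}(\mathcal{A},\mathcal{B})=\mathcal{E}\cap(\mathcal{A}\times\mathcal{B})$. *)

(* Defs.v *)
From HB Require Import structures.
From mathcomp Require Import all_boot all_order all_algebra finmap.
From mathcomp Require Import mathcomp_extra boolp reals exp.
Set Implicit Arguments. Unset Strict Implicit. Unset Printing Implicit Defensive.
Import Order.TTheory GRing.Theory Num.Theory.
Local Open Scope ring_scope.
Local Open Scope fset_scope.

Section WBG.
Variable R : realType.

Definition muS (mu : R -> R) (T : {fset R}) : R := \sum_(t <- T) mu t.

Definition muE (mu : R -> R) (E : {fset (R * R)}) : R :=
  \sum_(e <- E) mu e.1 * mu e.2.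

Definition is_wbg (mu : R -> R) (V W : {fset R}) (E : {fset (R * R)}) : Prop :=
  (forall t : R, 0 < t -> 0 < mu t) /\
  (forall v, v \in V -> 0 < v) /\
  (forall w, w \in W -> 0 < w) /\
  (forall e, e \in E -> (e.1 \in V) && (e.2 \in W)).

Definition density (mu : R -> R) (V W : {fset R}) (E : {fset (R * R)}) : R :=
  if E == fset0 then 0 else muE mu E / (muS mu V * muS mu W).

Definition mu_theta (theta : R) (mu : R -> R) (V W : {fset R})
    (E : {fset (R * R)}) : R :=
  powR (density mu V W E) theta * muS mu V * muS mu W.

Definition is_subgraph (V' W' : {fset R}) (E' : {fset (R * R)})
    (V W : {fset R}) (E : {fset (R * R)}) : Prop :=
  V' `<=` V /\ W' `<=` W /\
  (forall e, e \in E' -> [&& e \in E, e.1 \in V' & e.2 \in W']).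

Definition theta_maximal (theta : R) (mu : R -> R) (V W : {fset R})
    (E : {fset (R * R)}) : Prop :=
  forall (V' W' : {fset R}) (E' : {fset (R * R)}),
    is_subgraph V' W' E' V W E -> mu_theta theta mu V' W' E' <= mu_theta theta mu V W E.

Definition edges_between (E : {fset (R * R)}) (A B : {fset R}) : {fset (R * R)} :=
  [fset e in E | (e.1 \in A) && (e.2 \in B)].

End WBG.

(* Main.v *)
Require Import Defs.
From HB Require Import structures.
From mathcomp Require Import all_boot all_order all_algebra finmap.
From mathcomp Require Import mathcomp_extra boolp reals exp.
From mathcomp Require Import ring lra.
Import Order.TTheory GRing.Theory Num.Theory.
Local Open Scope ring_scope.
Local Open Scope fset_scope.

Section H.
Variable R : realType.

Lemma sum_ge0' (T : eqType) (s : seq T) (f : T -> R) :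
  (forall x, x \in s -> 0 <= f x) -> 0 <= \sum_(x <- s) f x.
Proof. by move=> h; rewrite big_seq; apply: sumr_ge0 => x /h. Qed.

Lemma sum_gt0' (T : eqType) (s : seq T) (f : T -> R) y :
  (forall x, x \in s -> 0 <= f x) -> y \in s -> 0 < f y -> 0 < \sum_(x <- s) f x.
Proof.
move=> h ys fy; rewrite (big_rem y ys) /=.
apply: (lt_le_trans fy); rewrite lerDl; apply: sum_ge0' => x /mem_rem; exact: h.
Qed.

Lemma powR_rev (t x y : R) : 0 < t -> 0 <= x -> 0 <= y -> x `^ t <= y `^ t -> x <= y.
Proof.
move=> t0 x0 y0 h; rewrite leNgt; apply/negP => yx.
have := gt0_ltr_powR t0 y0 x0 yx; by rewrite ltNge h.
Qed.
End H.

Theorem lemma5p12 (R : realType) (theta : R) (mu : R -> R) (V W : {fset R})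
    (E : {fset (R * R)}) (eta : R) :
  1 <= theta ->
  is_wbg mu V W E ->
  theta_maximal theta mu V W E ->
  0 < density mu V W E ->
  0 < eta -> eta <= 1 ->
  forall (A B : {fset R}), A `<=` V -> B `<=` W ->
    muS mu A <= eta * muS mu V ->
    muS mu B <= eta * muS mu W ->
    muE mu (edges_between E A B) <= powR eta (2 - 2 / theta) * muE mu E.
Proof.
move=> th1 [mupos [Vpos [Wpos Esub]]] tmax dpos eta0 eta1 A B AV BW hA hB.
set E' := edges_between E A B.
have muV : forall x, x \in V -> 0 < mu x by move=> x /Vpos; exact: mupos.
have muW : forall x, x \in W -> 0 < mu x by move=> x /Wpos; exact: mupos.
have eE0 : 0 <= muE mu E.
  apply: sum_ge0' => x /Esub /andP[/muV ? /muW ?]; exact: mulr_ge0 (ltW _) (ltW _).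
have a0 : 0 <= muS mu A.
  by apply: sum_ge0' => x /(fsubsetP AV) /muV /ltW.
have b0 : 0 <= muS mu B.
  by apply: sum_ge0' => x /(fsubsetP BW) /muW /ltW.
have [E'0|E'n] := eqVneq E' fset0.
  rewrite /E' in E'0 *; rewrite E'0 /muE big_nil.
  by apply: mulr_ge0 => //; exact: powR_ge0.
have /fset0Pn [x xE'] := E'n.
have memE' : forall e, e \in E' -> [&& e \in E, e.1 \in A & e.2 \in B].
  by move=> e; rewrite /E' /edges_between !inE.
have muA : forall y, y \in A -> 0 < mu y by move=> y /(fsubsetP AV) /muV.
have muB : forall y, y \in B -> 0 < mu y by move=> y /(fsubsetP BW) /muW.
have /and3P [xE xA xB] := memE' x xE'.
have aP : 0 < muS mu A.
  rewrite /muS; apply: (@sum_gt0' R _ _ _ x.1) => //; last exact: muA.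
  by move=> y /muA /ltW.
have bP : 0 < muS mu B.
  rewrite /muS; apply: (@sum_gt0' R _ _ _ x.2) => //; last exact: muB.
  by move=> y /muB /ltW.
have eP' : 0 < muE mu E'.
  rewrite /muE; apply: (@sum_gt0' R _ _ _ x) => //; last exact: mulr_gt0 (muA _ xA) (muB _ xB).
  by move=> y /memE' /and3P [_ /muA ? /muB ?]; exact: mulr_ge0 (ltW _) (ltW _).
have sub : is_subgraph A B E' V W E.
  by split; [|split]; [| |move=> e /memE'].
have H := tmax _ _ _ sub.
move: H dpos; rewrite /mu_theta /density (negbTE E'n).
have [->|En] := eqVneq E fset0; first by rewrite ltxx.
set a := muS mu A; set b := muS mu B; set v := muS mu V; set w := muS mu W.
set e' := muE mu E'; set e := muE mu E.
move=> H dpos.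
have t0 : 0 < theta by apply: lt_le_trans th1.
have vP : 0 < v by have := lt_le_trans aP hA; rewrite pmulr_rgt0.
have wP : 0 < w by have := lt_le_trans bP hB; rewrite pmulr_rgt0.
have eP : 0 < e by move: dpos; rewrite pmulr_lgt0 // invr_gt0 mulr_gt0.
have ab0 : 0 <= a * b by rewrite mulr_ge0.
have vw0 : 0 <= v * w by rewrite mulr_ge0 // ltW.
have abvw : a * b <= (eta `^ 2) * (v * w).
  rewrite powR_mulrn ?(ltW eta0) // expr2 mulrACA.
  by apply: ler_pM => //; rewrite ltW.
have step1 : e' `^ theta = (e' / (a * b)) `^ theta * a * b * (a * b) `^ (theta - 1).
  rewrite -(mulrA _ a b) -mulrA mulr_powRB1 // -powRM ?divr_ge0 ?ltW ?mulr_gt0 // divfK //.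
  by rewrite gt_eqF // mulr_gt0.
have step2 : e `^ theta = (e / (v * w)) `^ theta * v * w * (v * w) `^ (theta - 1).
  rewrite -(mulrA _ v w) -mulrA mulr_powRB1 // -powRM ?divr_ge0 ?ltW ?mulr_gt0 // divfK //.
  by rewrite gt_eqF // mulr_gt0.
have step3 : (a * b) `^ (theta - 1) <= eta `^ (2 * (theta - 1)) * (v * w) `^ (theta - 1).
  rewrite powRrM -powRM ?powR_ge0 //.
  apply: ge0_ler_powR => //; first by rewrite subr_ge0.
  by rewrite nnegrE mulr_ge0 ?powR_ge0.
have key : e' `^ theta <= eta `^ (2 * (theta - 1)) * e `^ theta.
  rewrite step1 step2.
  apply: (le_trans (ler_wpM2r (powR_ge0 _ _) H)).
  apply: (le_trans (ler_wpM2l _ step3)).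
    by rewrite !mulr_ge0 ?powR_ge0 ?ltW.
  by rewrite le_eqVlt; apply/orP; left; apply/eqP; ring.
apply: (@powR_rev R _ _ _ t0); first exact: (ltW eP').
  by rewrite mulr_ge0 ?powR_ge0 ?ltW.
rewrite powRM ?powR_ge0 ?(ltW eP) // -powRrM.
have -> : (2 - 2 / theta) * theta = 2 * (theta - 1).
  by field; rewrite gt_eqF.
exact: key.
Qed.
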